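(* Let $g_1,\dots,g_r\in\mathbb R[X_1,\dots,X_n]$ and $r_0>0$ with $r_0^2-\|\mathbf X\|_2^2\in\mathcal Q_{\ell_0}(\mathbf g)$. Then for all $t\in\mathbb N$ and $\ell\ge 2t-2+\ell_0$, every $L\in\mathcal L^{(1)}_\ell(\mathbf g)$ satisfies $$\|L^{[2t]}\|_2\le\sqrt{\binom{n+t}{t}}\ \sum_{k=0}^t r_0^{2k}.$$
   Context: $\Sigma^2$ sums of squares; $\mathcal Q_\ell(\mathbf g)=\{s_0+\sum_is_ig_i: s_j\in\Sigma^2,\deg s_0\le\ell,\deg(s_ig_i)\le\ell\}$; $\|\mathbf X\|_2^2=\sum X_i^2$. $\mathcal L^{(1)}_\ell(\mathbf g)=\{L$ linear functional on $\mathbb R[\mathbf X]_\ell$ (polynomials of degree $\le\ell$) with $L(q)\ge0$ for all $q\in\mathcal Q_\ell(\mathbf g)$ and $L(1)=1\}$. $L^{[2t]}$ is the restriction of $L$ to $\mathbb R[\mathbf X]_{2t}$, identified with the vector $(L(\mathbf X^\alpha))_{|\alpha|\le2t}$, and $\|\cdot\|_2$ is its Euclidean norm. (The paper writes $r$ for $r_0$.) *)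

(* Defs.v *)
From HB Require Import structures.
From mathcomp Require Import all_boot all_order all_algebra.
From mathcomp Require Import mpoly.
Set Implicit Arguments. Unset Strict Implicit. Unset Printing Implicit Defensive.
Import Order.TTheory GRing.Theory Num.Theory.
Local Open Scope ring_scope.

Section Defs.
Variables (R : rcfType) (n : nat).

Definition is_sos (p : {mpoly R[n]}) : Prop :=
  exists s : seq {mpoly R[n]}, p = \sum_(q <- s) q ^+ 2.

(* degree of p is at most l  (msize p = 1 + deg p, msize 0 = 0) *)
Definition deg_le (p : {mpoly R[n]}) (l : nat) : Prop := (msize p <= l.+1)%N.

Definition in_qmodule (r : nat) (g : 'I_r -> {mpoly R[n]}) (l : nat)
    (q : {mpoly R[n]}) : Prop :=
  exists (s0 : {mpoly R[n]}) (s : 'I_r -> {mpoly R[n]}),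
    [/\ is_sos s0, deg_le s0 l,
        (forall i, is_sos (s i) /\ deg_le (s i * g i) l)
      & q = s0 + \sum_(i < r) s i * g i].

(* A linear functional L on R[X]_l is given by its values y m = L(X^m) on
   monomials (only the values with mdeg m <= l matter); it acts on p by
   linearity. *)
Definition riesz (y : 'X_{1..n} -> R) (p : {mpoly R[n]}) : R :=
  \sum_(m <- msupp p) p@_m * y m.

Definition in_L1 (r : nat) (g : 'I_r -> {mpoly R[n]}) (l : nat)
    (y : 'X_{1..n} -> R) : Prop :=
  (forall q, in_qmodule g l q -> 0 <= riesz y q) /\ riesz y 1 = 1.

Definition sqnormX : {mpoly R[n]} := \sum_(i < n) 'X_i ^+ 2.

Definition trunc_norm (y : 'X_{1..n} -> R) (t : nat) : R :=
  Num.sqrt (\sum_(m : 'X_{1..n < (2 * t).+1}) y (val m) ^+ 2).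

End Defs.

(* Main.v *)
Require Import Defs.
From HB Require Import structures.
From mathcomp Require Import all_boot all_order all_algebra.
From mathcomp Require Import mpoly ssrcomplements.
From mathcomp Require Import lra ring zify.
Import Order.TTheory GRing.Theory Num.Theory.
Local Open Scope ring_scope.
Set Implicit Arguments. Unset Strict Implicit. Unset Printing Implicit Defensive.

Lemma sum_le_rel (F : numDomainType) (I J : finType) (P : pred I) (Q : pred J)
  (f : I -> F) (G : J -> F) (rel : J -> I -> bool) :
  (forall j, Q j -> 0 <= G j) ->
  (forall i, P i -> exists j, [/\ Q j, rel j i & f i <= G j]) ->
  (forall j i1 i2, rel j i1 -> rel j i2 -> i1 = i2) ->
  \sum_(i | P i) f i <= \sum_(j | Q j) G j.
Proof.
move=> G0 ex fun_rel.
apply: (@le_trans _ _ (\sum_(i | P i) \sum_(j | Q j && rel j i) G j)).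
  apply: ler_sum => i Pi; have [j [Qj rji fG]] := ex i Pi.
  rewrite (bigD1 j) /= ?Qj ?rji //; apply: (le_trans fG).
  by rewrite lerDl; apply: sumr_ge0 => k /andP[/andP[]] *; exact: G0.
rewrite (exchange_big_dep Q) /=; last by move=> i j _ /andP[].
apply: ler_sum => j Qj.
case: (pickP (fun i => P i && rel j i)) => [i0 /andP[Pi0 ri0]|none].
  rewrite (big_pred1 i0) // => i /=; apply/idP/eqP.
    by case/and3P=> _ _ rji; exact: (fun_rel j i i0 rji ri0).
  by move=> ->; rewrite Pi0 Qj ri0.
rewrite big_pred0 ?G0 // => i; rewrite Qj /=; exact: none.
Qed.

Lemma quad_cs (F : realFieldType) (A B C : F) :
  (forall a b : F, 0 <= a ^+ 2 * A + 2 * a * b * C + b ^+ 2 * B) ->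
  C ^+ 2 <= A * B.
Proof.
move=> h.
have A0 : 0 <= A by have := h 1 0; rewrite expr1n; nra.
have B0 : 0 <= B by have := h 0 1; rewrite expr1n; nra.
have [Apos|] := ltP 0 A.
  have := h (- C) A.
  move=> H; have: 0 <= A * (A * B - C ^+ 2) by nra.
  rewrite pmulr_rge0 // subr_ge0 //.
move=> Ale0; have A00 : A = 0 by apply/le_anti; rewrite Ale0 A0.
have := h (- B - 1) C; rewrite A00 => H.
have : C ^+ 2 <= 0 by nra.
by rewrite mul0r.
Qed.
Section Poly.
Variables (R : rcfType) (n : nat).
Implicit Types (p q : {mpoly R[n]}) (y : 'X_{1..n} -> R).

Lemma rieszE y p i : (msize p <= i)%N ->
  riesz y p = \sum_(m : 'X_{1..n < i}) p@_m * y m.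
Proof.
move=> le_pi; set I : subFinType _ := 'X_{1..n < i}.
rewrite /riesz (big_mksub I) ?msupp_uniq //=; first last.
  by move=> x /msize_mdeg_lt /leq_trans; apply.
rewrite big_rmcond //= => j /memN_msupp_eq0 ->.
by rewrite mul0r.
Qed.

Lemma rieszD y p q : riesz y (p + q) = riesz y p + riesz y q.
Proof.
pose i := (maxn (msize (p + q)) (maxn (msize p) (msize q))).
rewrite !(@rieszE y _ i) ?leq_maxl ?leq_max ?leqnn ?orbT // -big_split /=.
by apply: eq_bigr => m _; rewrite mcoeffD mulrDl.
Qed.

Lemma rieszZ y c p : riesz y (c *: p) = c * riesz y p.
Proof.
rewrite !(@rieszE y _ (msize p)) ?msizeZ_le // mulr_sumr.
by apply: eq_bigr => m _; rewrite mcoeffZ mulrA.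
Qed.

Lemma riesz0 y : riesz y 0 = 0.
Proof. by rewrite /riesz msupp0 big_nil. Qed.

Lemma rieszB y p q : riesz y (p - q) = riesz y p - riesz y q.
Proof. by rewrite rieszD -scaleN1r rieszZ mulN1r. Qed.

Lemma riesz_sum y (I : Type) (r : seq I) (P : pred I) (F : I -> {mpoly R[n]}) :
  riesz y (\sum_(i <- r | P i) F i) = \sum_(i <- r | P i) riesz y (F i).
Proof. by apply: (big_morph _ (rieszD y) (riesz0 y)). Qed.

Lemma rieszX y (m : 'X_{1..n}) : riesz y 'X_[m] = y m.
Proof. by rewrite /riesz msuppX big_seq1 mcoeffX eqxx mul1r. Qed.

Lemma deg_le_mon p a b : deg_le p a -> (a <= b)%N -> deg_le p b.
Proof. by rewrite /deg_le => h1 h2; apply: (leq_trans h1). Qed.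

Lemma deg_leX (m : 'X_{1..n}) : deg_le ('X_[m] : {mpoly R[n]}) (mdeg m).
Proof. by rewrite /deg_le msizeX. Qed.

Lemma deg_leD p q a : deg_le p a -> deg_le q a -> deg_le (p + q) a.
Proof.
rewrite /deg_le => h1 h2; apply: (leq_trans (msizeD_le _ _)).
by rewrite geq_max h1 h2.
Qed.

Lemma deg_leZ p c a : deg_le p a -> deg_le (c *: p) a.
Proof. by rewrite /deg_le => h; apply: (leq_trans (msizeZ_le _ _)). Qed.

Lemma deg_le0 a : deg_le (0 : {mpoly R[n]}) a.
Proof. by rewrite /deg_le msize0. Qed.

Lemma deg_leM p q a b : deg_le p a -> deg_le q b -> deg_le (p * q) (a + b).
Proof.
rewrite /deg_le => h1 h2.
have [->|p0] := eqVneq p 0; first by rewrite mul0r msize0.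
have [->|q0] := eqVneq q 0; first by rewrite mulr0 msize0.
rewrite msizeM //.
have hp : (0 < msize p)%N by rewrite lt0n msize_poly_eq0 p0.
have hq : (0 < msize q)%N by rewrite lt0n msize_poly_eq0 q0.
rewrite -ltnS prednK ?addn_gt0 ?hp //. apply: (leq_trans (leq_add h1 h2)); by rewrite addSn addnS.
Qed.

Lemma sos_sq p : is_sos (p ^+ 2).
Proof. by exists [:: p]; rewrite big_seq1. Qed.

Lemma sos0 : is_sos (0 : {mpoly R[n]}).
Proof. by exists [::]; rewrite big_nil. Qed.

Lemma sos_mulsq p s : is_sos s -> is_sos (p ^+ 2 * s).
Proof.
case=> S ->; exists (map (fun q => p * q) S).
by rewrite big_map mulr_sumr; apply: eq_bigr => q _; rewrite exprMn.
Qed.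

Lemma qmod_mulsq r (g : 'I_r -> {mpoly R[n]}) l q p k :
  in_qmodule g l q -> deg_le p k -> in_qmodule g (k + k + l) (p ^+ 2 * q).
Proof.
case=> s0 [s [sos0' deg0 hs ->]] dp.
have dp2 : deg_le (p ^+ 2) (k + k) by rewrite expr2; exact: deg_leM.
exists (p ^+ 2 * s0), (fun i => p ^+ 2 * s i); split.
- exact: sos_mulsq.
- exact: deg_leM.
- move=> i; have [si di] := hs i; split; first exact: sos_mulsq.
  by rewrite -mulrA; exact: deg_leM.
- by rewrite mulrDr mulr_sumr; congr (_ + _); apply: eq_bigr => i _; rewrite mulrA.
Qed.

Lemma L1_pos r (g : 'I_r -> {mpoly R[n]}) l y p :
  in_L1 g l y -> is_sos p -> deg_le p l -> 0 <= riesz y p.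
Proof.
case=> hpos _ sp dp; apply: hpos.
exists p, (fun _ => 0); split => //.
- by move=> i; split; [exact: sos0 | rewrite mul0r; exact: deg_le0].
- by rewrite big1 ?addr0 // => i _; rewrite mul0r.
Qed.

End Poly.

Section Main.
Variables (R : rcfType) (n r : nat) (g : 'I_r -> {mpoly R[n]}) (r0 : R) (l0 : nat).
Hypothesis r0pos : 0 < r0.
Hypothesis hq : in_qmodule g l0 (r0 ^+ 2 *: 1 - sqnormX R n).
Variables (t l : nat).
Hypothesis htl : (2 * t + l0 <= l + 2)%N.
Variable y : 'X_{1..n} -> R.
Hypothesis hy : in_L1 g l y.

Lemma deg_le_sum (I : Type) (s : seq I) (P : pred I) (F : I -> {mpoly R[n]}) a :
  (forall i, P i -> deg_le (F i) a) -> deg_le (\sum_(i <- s | P i) F i) a.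
Proof.
move=> h; apply: (big_ind (fun p => deg_le p a)).
- exact: deg_le0.
- by move=> x z; apply: deg_leD.
- exact: h.
Qed.

Lemma qmod_mon a b q : in_qmodule g a q -> (a <= b)%N -> in_qmodule g b q.
Proof.
case=> s0 [s [h1 h2 h3 h4]] ab; exists s0, s; split => //.
- exact: deg_le_mon ab.
- by move=> i; have [u v] := h3 i; split => //; exact: deg_le_mon ab.
Qed.

Lemma l0_ge2 : 'I_n -> (2 <= l0)%N.
Proof.
move=> i; have hq' := hq.
case: hq' => s0 [s [_ d0 hs eq]].
have dq : deg_le (r0 ^+ 2 *: 1 - sqnormX R n) l0.
  rewrite eq; apply: deg_leD => //; apply: deg_le_sum => j _; by case: (hs j).
set m := (U_(i) *+ 2)%MM.
have mdm : mdeg m = 2%N by rewrite mdegMn mdeg1.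
have cm : (r0 ^+ 2 *: 1 - sqnormX R n)@_m = -1.
  rewrite mcoeffB mcoeffZ mcoeff1.
  have -> : (m == 0%MM) = false by apply/negbTE; rewrite -mdeg_eq0 mdm.
  rewrite mulr0 add0r /sqnormX raddf_sum /=; congr (- _).
  rewrite (bigD1 i) //= mpolyXn mcoeffX eqxx big1 ?addr0 // => j ji.
  rewrite mpolyXn mcoeffX; case: eqP => // /mnmP /(_ j).
  by rewrite !mulmnE !mnm1E eqxx eq_sym (negbTE ji).
have : m \in msupp (r0 ^+ 2 *: 1 - sqnormX R n).
  by rewrite mcoeff_msupp cm oppr_eq0 oner_eq0.
move/msize_mdeg_lt; rewrite mdm => h.
by move: dq; rewrite /deg_le => /(leq_trans h).
Qed.

Lemma two_deg (m : 'X_{1..n}) : (mdeg m <= t)%N -> (2 * mdeg m <= l)%N.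
Proof.
move=> hm; case: (pickP (fun i : 'I_n => true)) => [i _|none].
  have := l0_ge2 i; lia.
have -> : m = 0%MM by apply/mnmP => i; have := none i.
by rewrite mdeg0.
Qed.

Lemma pos_sq (m : 'X_{1..n}) : (2 * mdeg m <= l)%N -> 0 <= y (m *+ 2)%MM.
Proof.
move=> h; rewrite -rieszX -mpolyXn; apply: (L1_pos hy); first exact: sos_sq.
rewrite expr2; apply: (@deg_le_mon _ _ _ (mdeg m + mdeg m)); last by lia.
by apply: deg_leM; exact: deg_leX.
Qed.

Lemma cs (a b : 'X_{1..n}) : (2 * mdeg a <= l)%N -> (2 * mdeg b <= l)%N ->
  y (a + b)%MM ^+ 2 <= y (a *+ 2)%MM * y (b *+ 2)%MM.
Proof.
move=> ha hb; apply: quad_cs => u v.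
pose p : {mpoly R[n]} := u%:MP * 'X_[a] + v%:MP * 'X_[b].
have E : p ^+ 2 = (u ^+ 2) *: 'X_[a *+ 2] + (2 * u * v) *: 'X_[a + b]
                  + (v ^+ 2) *: 'X_[b *+ 2].
  rewrite -!mul_mpolyC !rmorphXn !rmorphM /= rmorph_nat -!mpolyXn mpolyXD /p.
  ring.
have := L1_pos hy (sos_sq p).
rewrite E !rieszD !rieszZ !rieszX; apply.
rewrite -E expr2; apply: deg_le_mon.
  apply: (@deg_leM _ _ _ _ (maxn (mdeg a) (mdeg b)) (maxn (mdeg a) (mdeg b))) ;
  apply: deg_leD; rewrite mul_mpolyC; apply: deg_leZ; first [apply: (deg_le_mon (deg_leX R a)) | apply: (deg_le_mon (deg_leX R b))];
  by rewrite ?leq_maxl ?leq_maxr.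
lia.
Qed.

Lemma step (b : 'X_{1..n}) : (2 * mdeg b + l0 <= l)%N ->
  \sum_(i < n) y ((b + U_(i)) *+ 2)%MM <= r0 ^+ 2 * y (b *+ 2)%MM.
Proof.
move=> hb.
have hm := qmod_mulsq hq (deg_leX R b).
have hm' := qmod_mon hm (_ : (mdeg b + mdeg b + l0 <= l)%N).
have := (proj1 hy) _ (hm' ltac:(lia)).
have E : 'X_[b] ^+ 2 * (r0 ^+ 2 *: 1 - sqnormX R n) =
   r0 ^+ 2 *: 'X_[b *+ 2] - \sum_(i < n) 'X_[(b + U_(i)) *+ 2].
  rewrite mulrBr -scalerAr mulr1 mpolyXn /sqnormX mulr_sumr; congr (_ - _).
  apply: eq_bigr => i _; rewrite !mpolyXn -mpolyXD; congr 'X_[_].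
  by apply/mnmP => j; rewrite !(mnmDE, mulmnE) mulnDl.
by rewrite E rieszB rieszZ rieszX riesz_sum subr_ge0; under eq_bigr do rewrite rieszX.
Qed.


Lemma split_ex (c : 'X_{1..n}) k : (k <= mdeg c)%N ->
  exists a : 'X_{1..n}, (a <= c)%MM /\ mdeg a = k.
Proof.
elim: k => [|k IH] hk.
  exists 0%MM; split; last exact: mdeg0.
  by apply/mnm_lepP => i; rewrite mnm0E.
have [a [ac da]] := IH (ltnW hk).
have [i hi] : exists i, (a i < c i)%N.
  case/boolP: [exists i, (a i < c i)%N] => [/existsP //|/existsPn hn].
  have : (mdeg c <= mdeg a)%N.
    rewrite !mdegE; apply: leq_sum => i _; by rewrite leqNgt hn.
  by rewrite da leqNgt hk.
 exists (a + U_(i))%MM; split; last by rewrite mdegD mdeg1 da addn1.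
apply/mnm_lepP => j; rewrite mnmDE mnm1E.
case: eqP => [<-|_]; first by rewrite addn1.
by rewrite addn0; apply: (mnm_lepP ac).
Qed.

Lemma exists_pos (a : 'X_{1..n}) : mdeg a != 0%N -> exists i, (0 < a i)%N.
Proof.
move=> h; case/boolP: [exists i, (0 < a i)%N] => [/existsP //|/existsPn hn].
move: h; rewrite mdegE big1 // => i _.
by have := hn i; rewrite lt0n negbK => /eqP.
Qed.

Definition aa (c : 'X_{1..n < t.+1}) := y (val c *+ 2)%MM.
Definition TT k := \sum_(c : 'X_{1..n < t.+1} | mdeg c == k) aa c.

Lemma mul0m2 : ((0 : 'X_{1..n}) *+ 2)%MM = 0%MM.
Proof. by apply/mnmP => i; rewrite mulmnE mnm0E. Qed.

Lemma TT_bound k : (k <= t)%N -> TT k <= r0 ^+ (2 * k).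
Proof.
elim: k => [|k IH] hk.
  rewrite /TT (big_pred1 bm0); last first.
    by move=> c /=; rewrite mdeg_eq0.
  rewrite /aa /= mul0m2 -rieszX mpolyX0 (proj2 hy) muln0 expr0 //.
have hk' : (k <= t)%N by lia.
apply: (@le_trans _ _ (\sum_(p : 'X_{1..n < t.+1} * 'I_n | mdeg p.1 == k)
                          y ((val p.1 + U_(p.2)) *+ 2)%MM)).
  apply: (@sum_le_rel _ _ _ _ _ _ _ (fun p c => (val p.1 + U_(p.2))%MM == val c)).
  - move=> [b i] /= /eqP db; apply: pos_sq; apply: two_deg.
    by rewrite mdegD mdeg1 db addn1.
  - move=> c /eqP dc.
    have [i hi] : exists i, (0 < val c i)%N by apply: exists_pos; rewrite dc.
    have le1 : (U_(i) <= val c)%MM by rewrite lep1mP -lt0n.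
    have dcb : mdeg (val c - U_(i))%MM = k.
      by have := congr1 mdeg (submK le1); rewrite mdegD mdeg1 dc addn1 => -[].
    have bb : (mdeg (val c - U_(i))%MM < t.+1)%N by rewrite dcb ltnS.
    exists (BMultinom bb, i); rewrite /= dcb eqxx submK //; split => //.
  - by move=> [b i] c1 c2 /= /eqP h1 /eqP h2; apply: val_inj; rewrite /= -h1 -h2.
have -> : \sum_(p : 'X_{1..n < t.+1} * 'I_n | mdeg p.1 == k)
             y ((val p.1 + U_(p.2)) *+ 2)%MM =
          \sum_(b : 'X_{1..n < t.+1} | mdeg b == k) \sum_(i < n) y ((val b + U_(i)) *+ 2)%MM.
  by rewrite pair_big_dep /=; apply: eq_bigl => p; rewrite andbT.
apply: (@le_trans _ _ (\sum_(b : 'X_{1..n < t.+1} | mdeg b == k) r0 ^+ 2 * aa b)).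
  apply: ler_sum => b /eqP db; apply: step; have db2 : mdeg (val b) = k by exact: db. rewrite db2. lia.
rewrite -mulr_sumr -/(TT k) mulnS exprD.
apply: ler_wpM2l; first by rewrite exprn_ge0 // ltW.
exact: IH.
Qed.

Theorem final_bound :
  trunc_norm y t <= Num.sqrt ('C(n + t, t))%:R * \sum_(k < t.+1) r0 ^+ (2 * k).
Proof.
set S := \sum_(k < t.+1) r0 ^+ (2 * k).
have S0 : 0 <= S by apply: sumr_ge0 => k _; rewrite exprn_ge0 // ltW.
have aa0 : forall c, 0 <= aa c.
  by move=> c; apply: pos_sq; apply: two_deg; rewrite -ltnS bmdeg.
have sumaa : \sum_c aa c <= S.
  rewrite (partition_big (fun c : 'X_{1..n < t.+1} => Ordinal (bmdeg c)) predT) //=.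
  apply: ler_sum => k _.
  have -> : \sum_(i | true && (Ordinal (bmdeg i) == k)) aa i = TT k.
    by apply: eq_bigl => c.
  apply: TT_bound; rewrite -ltnS; exact: ltn_ord.
have main : \sum_(m : 'X_{1..n < (2 * t).+1}) y (val m) ^+ 2 <= (\sum_c aa c) ^+ 2.
  rewrite expr2 mulr_suml.
  under [X in _ <= X]eq_bigr do rewrite mulr_sumr.
  rewrite pair_bigA /=.
  apply: (@sum_le_rel _ _ _ predT predT _ _ (fun p c => (val p.1 + val p.2)%MM == val c)).
  - by move=> p _; apply: mulr_ge0.
  - move=> c _.
    have hc : (mdeg (val c) < (2 * t).+1)%N by exact: bmdeg.
    have [a [ac da]] := split_ex (geq_minl (mdeg (val c)) t).
    have ha : (mdeg a < t.+1)%N by rewrite da ltnS geq_minr.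
    have db : mdeg (val c - a)%MM = (mdeg (val c) - minn (mdeg (val c)) t)%N.
      by have := congr1 mdeg (submK ac); rewrite mdegD da => h; lia.
    have hb : (mdeg (val c - a)%MM < t.+1)%N by rewrite db; lia.
    exists (BMultinom ha, BMultinom hb); rewrite /= addmC submK //; split => //.
    rewrite /aa /=; rewrite -{1}(submK ac) addmC; apply: cs; apply: two_deg.
      by rewrite da geq_minr.
    by rewrite -ltnS.
  - by move=> p c1 c2 /eqP h1 /eqP h2; apply: val_inj; rewrite -h1 -h2.
rewrite /trunc_norm; apply: (@le_trans _ _ S).
  rewrite -(ger0_norm S0) -sqrtr_sqr ler_sqrt ?exprn_ge0 //.
  apply: (le_trans main); rewrite ler_sqr ?nnegrE //; apply: sumr_ge0 => c _; exact: aa0.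
have C1 : 1 <= Num.sqrt ('C(n + t, t))%:R :> R.
  by rewrite -[X in X <= _]sqrtr1 ler_sqrt ?ler0n // ler1n bin_gt0 leq_addl.
by rewrite -{1}[S]mul1r ler_wpM2r.
Qed.

End Main.

Unset Implicit Arguments.
Theorem mainTheorem16 (R : rcfType) (n r : nat) (g : 'I_r -> {mpoly R[n]})
    (r0 : R) (l0 : nat) :
  0 < r0 ->
  in_qmodule g l0 (r0 ^+ 2 *: 1 - sqnormX R n) ->
  forall (t l : nat), (2 * t + l0 <= l + 2)%N ->
  forall y : 'X_{1..n} -> R, in_L1 g l y ->
  trunc_norm y t <= Num.sqrt ('C(n + t, t))%:R * \sum_(k < t.+1) r0 ^+ (2 * k).
Proof.
move=> r0pos hq t l htl y hy; exact: (final_bound r0pos hq htl hy).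
Qed.
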